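(* For all integers $q>r\geq 1$, there exists $\alpha\in[0,1]$ such that $f_{q,r}(N)=N^{\alpha+o(1)}$ as $N\to\infty$, i.e. $\log f_{q,r}(N)/\log N\to\alpha$.
   Context: For a $q$-edge-colored complete graph $K$ on vertex set $[N]$ with its natural order, $f_{q,r}(K)$ is the maximum number of vertices of a monotone path (vertices strictly increasing in traversal order) in $K$ whose edges use at most $r$ colors; $f_{q,r}(N)$ is the minimum of $f_{q,r}(K)$ over all such $q$-edge-colored $K$ on $N$ vertices. *)

(* Defs.v *)
From mathcomp Require Import all_boot.
Set Implicit Arguments. Unset Strict Implicit. Unset Printing Implicit Defensive.

(* The colour of the edge {x,y} with x < y is
   c (x, y); values of c on pairs (x,y) with x >= y are irrelevant. *)
Definition coloring (q N : nat) := {ffun 'I_N * 'I_N -> 'I_q}.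

Definition path_colors q N (c : coloring q N) (s : seq 'I_N) : seq 'I_q :=
  undup [seq c p | p <- zip s (behead s)].

Definition good_path q N (c : coloring q N) (r : nat) (s : seq 'I_N) : bool :=
  sorted (fun x y : 'I_N => (x < y)%N) s && (size (path_colors c s) <= r).

(* f_{q,r}(K): maximum number of vertices of such a path (a path with k
   vertices has k <= N since it is strictly increasing). *)
Definition f_K q N (c : coloring q N) (r : nat) : nat :=
  \max_(k < N.+1 | [exists t : k.-tuple 'I_N, good_path c r t]) k.

Definition f_qr (q r N : nat) : nat :=
  \big[minn/N]_(c : coloring q N) f_K c r.

(* Main.v *)
Require Import Defs.
From mathcomp Require Import all_boot zify.
From Stdlib Require Import Reals Lra Classical.
Set Implicit Arguments. Unset Strict Implicit. Unset Printing Implicit Defensive.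

Definition cols q N (c : coloring q N) (s : seq 'I_N) : seq 'I_q :=
  [seq c p | p <- zip s (behead s)].

Lemma f_K_ge q N (c : coloring q N) r s : good_path c r s -> size s <= f_K c r.
Proof.
move=> g.
have hs : size s < N.+1.
  have u : uniq s.
    move: g => /andP[so _]; apply: (sorted_uniq _ _ so).
    - by move=> ???; apply: ltn_trans.
    - by move=> ?; apply: ltnn.
  rewrite ltnS -(card_uniqP u); apply: leq_trans (max_card _) _; by rewrite card_ord.
rewrite /f_K.
have := @leq_bigmax_cond _ (fun k : 'I_N.+1 => [exists t : k.-tuple 'I_N, good_path c r t])
  (fun k => nat_of_ord k) (Ordinal hs).
apply; apply/existsP; by exists (in_tuple s).
Qed.

Lemma f_K_le q N (c : coloring q N) r m :
  (forall s, good_path c r s -> size s <= m) -> f_K c r <= m.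
Proof.
move=> H; apply/bigmax_leqP => k /existsP [t gt].
by rewrite -(size_tuple t); apply: H.
Qed.

Lemma f_K_leN q N (c : coloring q N) r : f_K c r <= N.
Proof. by apply/bigmax_leqP => k _; rewrite -ltnS; apply: ltn_ord. Qed.

Lemma bigmin_le (T : finType) (F : T -> nat) n x : \big[minn/n]_(i : T) F i <= F x.
Proof.
have : x \in index_enum T by apply: mem_index_enum.
elim: (index_enum T) => [//|y l IH]; rewrite in_cons big_cons => /orP [/eqP <-|h].
  by apply: geq_minl.
by rewrite geq_min IH // orbT.
Qed.

Lemma f_qr_le q r N (c : coloring q N) : f_qr q r N <= f_K c r.
Proof. exact: bigmin_le. Qed.

Lemma f_qr_ex q r N : 0 < q -> exists c : coloring q N, f_K c r <= f_qr q r N.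
Proof.
move=> q0.
pose c0 : coloring q N := [ffun _ => Ordinal q0].
case: (@arg_minnP _ c0 predT (fun c : coloring q N => f_K c r) isT) => c _ Hc.
exists c; rewrite /f_qr; elim/big_ind: _ => //.
- exact: f_K_leN.
- by move=> x y hx hy; rewrite leq_min hx hy.
Qed.

Lemma f_qr_leN q r N : f_qr q r N <= N.
Proof. rewrite /f_qr; elim/big_ind: _ => //; first by move=> x y hx _; rewrite geq_min hx.
by move=> i _; apply: f_K_leN. Qed.

Lemma f_qr_ge1 q r N : 0 < q -> 0 < N -> 0 < f_qr q r N.
Proof.
move=> q0 N0; case: (f_qr_ex r N q0) => c Hc; apply: leq_trans Hc.
apply: (@f_K_ge _ _ c r [:: Ordinal N0]).
by rewrite /good_path /path_colors /=.
Qed.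

Definition lexc q a' b' N (c1 : coloring q a'.+1) (c2 : coloring q b'.+1) : coloring q N :=
  [ffun e : 'I_N * 'I_N => if e.1 %/ b'.+1 == e.2 %/ b'.+1
     then c2 (inord (e.1 %% b'.+1), inord (e.2 %% b'.+1))
     else c1 (inord (e.1 %/ b'.+1), inord (e.2 %/ b'.+1))].

Lemma key q a' b' N (c1 : coloring q a'.+1) (c2 : coloring q b'.+1)
  (hN : N <= a'.+1 * b'.+1) (C : seq 'I_q) m2 :
  (forall t : seq 'I_b'.+1, sorted (fun x y : 'I_b'.+1 => x < y) t ->
       {subset cols c2 t <= C} -> size t <= m2) ->
  forall (s : seq 'I_N) (x : 'I_N), path (fun x y : 'I_N => x < y) x s ->
  {subset cols (lexc N c1 c2) (x :: s) <= C} ->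
  exists (p : seq 'I_a'.+1) (t : seq 'I_b'.+1),
    [/\ path (fun x y : 'I_a'.+1 => x < y) (inord (x %/ b'.+1)) p,
        path (fun x y : 'I_b'.+1 => x < y) (inord (x %% b'.+1)) t,
        {subset cols c1 (inord (x %/ b'.+1) :: p) <= C},
        {subset cols c2 (inord (x %% b'.+1) :: t) <= C} &
        size s <= size p * m2 + size t].
Proof.
move=> Hm2; elim=> [|y s IH] x.
  by move=> _ _; exists [::], [::]; split.
rewrite /= => /andP [xy ps] sub.
have sub' : {subset cols (lexc N c1 c2) (y :: s) <= C}.
  by move=> z zin; apply: sub; rewrite /cols /= in_cons zin orbT.
have cxy : lexc N c1 c2 (x, y) \in C by apply: sub; rewrite /cols /= in_cons eqxx.
have [p [t [pp pt sp st sz]]] := IH y ps sub'.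
have qa : forall z : 'I_N, z %/ b'.+1 < a'.+1.
  by move=> z; rewrite ltn_divLR //; apply: leq_trans (ltn_ord z) hN.
have rb : forall z : 'I_N, z %% b'.+1 < b'.+1 by move=> z; rewrite ltn_mod.
case: (eqVneq (x %/ b'.+1) (y %/ b'.+1)) => e.
- exists p, (inord (y %% b'.+1) :: t); split.
  + by rewrite e.
  + rewrite /= pt andbT !inordK //.
    move: xy; rewrite [in X in X < _ -> _](divn_eq x b'.+1).
    by rewrite [in X in _ < X -> _](divn_eq y b'.+1) e ltn_add2l.
  + by rewrite e.
  + move=> z; rewrite /cols /= in_cons => /orP [/eqP ->|zin].
      by move: cxy; rewrite /lexc ffunE /= e eqxx.
    by apply: st.
  + by rewrite /= addnS ltnS.
- exists (inord (y %/ b'.+1) :: p), [::]; split => //.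
  + rewrite /= pp andbT !inordK // ltn_neqAle e /=.
    by apply: leq_div2r; apply: ltnW.
  + move=> z; rewrite /cols /= in_cons => /orP [/eqP ->|zin].
      by move: cxy; rewrite /lexc ffunE /= (negbTE e).
    by apply: sp.
  + have ht : size (inord (y %% b'.+1) :: t) <= m2 by apply: Hm2.
    move: ht sz; rewrite /= addn0 mulSn; set u := size p * m2; lia.
Qed.

Lemma good_sub q N (c : coloring q N) r (C : seq 'I_q) t :
  size (undup C) <= r -> sorted (fun x y : 'I_N => x < y) t ->
  {subset cols c t <= C} -> size t <= f_K c r.
Proof.
move=> hC st sub; apply: f_K_ge; rewrite /good_path st /=.
apply: leq_trans hC; apply: uniq_leq_size; first exact: undup_uniq.
by move=> z; rewrite !mem_undup; apply: sub.
Qed.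

Lemma f_qr_sub q r N a b : 0 < q -> N <= a * b ->
  f_qr q r N <= f_qr q r a * f_qr q r b.
Proof.
move=> q0 hN.
case: N hN => [|N] hN; first by apply: leq_trans (f_qr_leN _ _ _) _.
case: a hN => [|a'] hN; first by [].
case: b hN => [|b'] hN; first by rewrite muln0 in hN.
have [c1 H1] := f_qr_ex r a'.+1 q0.
have [c2 H2] := f_qr_ex r b'.+1 q0.
apply: leq_trans (f_qr_le r (lexc N.+1 c1 c2)) _.
apply: leq_trans _ (leq_mul H1 H2).
apply: f_K_le => -[|x s] //= /andP [so sc].
set C := cols (lexc N.+1 c1 c2) (x :: s).
have hC : size (undup C) <= r by [].
have [p [t [pp pt sp st sz]]] :=
  key hN (fun t => good_sub hC) so (fun z (h : z \in C) => h).
have h2 := good_sub hC (pt : sorted _ (_ :: t)) st.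
have h1 := good_sub hC (pp : sorted _ (_ :: p)) sp.
move: h1 h2 sz; rewrite /=.
set m1 := f_K c1 r; set m2 := f_K c2 r.
move=> h1 h2 sz.
apply: leq_trans (leq_mul h1 (leqnn m2)).
rewrite mulSn; move: h2 sz; set u := size p * m2; lia.
Qed.
Open Scope R_scope.

Lemma f_pow (q r M j N : nat) : (0 < q)%nat -> (N <= expn M j)%nat ->
  (f_qr q r N <= expn (f_qr q r M) j)%nat.
Proof.
move=> q0; elim: j N => [|j IH] N hN.
  by rewrite expn0; apply: leq_trans (f_qr_leN _ _ _) _; rewrite expn0 in hN.
rewrite expnS in hN; apply: leq_trans (f_qr_sub r q0 hN) _.
by rewrite expnS leq_mul2l IH ?orbT.
Qed.

Lemma lnle x y : 0 < x -> x <= y -> ln x <= ln y.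
Proof.
intros hx hxy; destruct (Rle_lt_or_eq_dec _ _ hxy) as [h|h].
- left; apply ln_increasing; auto.
- rewrite h; right; reflexivity.
Qed.

Lemma rbound A B a b k : 0 < b -> 1 <= k -> k*b <= B -> 0 <= A ->
  A <= (k+1)*a -> 0 <= a <= b -> A/B <= a/b + /k.
Proof.
intros hb hk hB hA hAa hab.
assert (hB0 : 0 < B) by nra.
set (X := A/B). set (Y := a/b).
assert (eX : X*B = A) by (unfold X; field; lra).
assert (eY : Y*b = a) by (unfold Y; field; lra).
assert (X0 : 0 <= X) by (unfold X; apply Rmult_le_pos; [lra| apply Rlt_le, Rinv_0_lt_compat; lra]).
assert (Y1 : Y <= 1) by nra.
apply Rmult_le_reg_r with (k*b); [nra|].
rewrite Rmult_plus_distr_r.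
replace (/k * (k*b)) with b by (field; lra).
assert (X*(k*b) <= X*B) by nra.
assert (A <= Y*(k*b) + Y*b) by nra.
nra.
Qed.

Lemma INR_expn (m n : nat) : INR (expn m n) = INR m ^ n.
Proof.
elim: n => [|n IH]; first by rewrite expn0.
by rewrite expnS -multE mult_INR IH.
Qed.

Definition rN q r n := ln (INR (f_qr q r n)) / ln (INR n).

Lemma INR_ge (a b : nat) : (a <= b)%nat -> INR a <= INR b.
Proof. by move/leP; apply: le_INR. Qed.

Lemma lnpos (n : nat) : (2 <= n)%nat -> 0 < ln (INR n).
Proof.
move=> h; rewrite -ln_1; apply: ln_increasing; first lra.
have := INR_ge h; simpl; lra.
Qed.

Lemma rN_bnd q r n : (0 < q)%nat -> (2 <= n)%nat -> 0 <= rN q r n <= 1.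
Proof.
move=> q0 hn.
have f1 : (1 <= f_qr q r n)%nat by apply: f_qr_ge1 => //; lia.
have fn := f_qr_leN q r n.
have F1 := INR_ge f1. have Fn := INR_ge fn. simpl in F1.
have ln0 := lnpos hn.
have la : 0 <= ln (INR (f_qr q r n)) by rewrite -ln_1; apply: lnle; lra.
have lb : ln (INR (f_qr q r n)) <= ln (INR n) by apply: lnle; lra.
rewrite /rN; split.
  apply: Rmult_le_pos => //; apply/Rlt_le/Rinv_0_lt_compat => //.
apply: (Rmult_le_reg_r (ln (INR n))) => //.
rewrite /Rdiv Rmult_assoc Rinv_l; lra.
Qed.

Lemma rN_step q r n M k : (0 < q)%nat -> (2 <= M)%nat -> (1 <= k)%nat ->
  (expn M k <= n)%nat -> (n < expn M k.+1)%nat ->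
  rN q r n <= rN q r M + / INR k.
Proof.
move=> q0 hM hk h1 h2.
have hn : (2 <= n)%nat.
  apply: leq_trans h1; apply: leq_trans (leq_pexp2l _ hk); rewrite ?expn1 //; lia.
have fn := f_pow r q0 (ltnW h2).
have [b0 b1] := rN_bnd r q0 hM.
have lM := lnpos hM.
have f1 : (1 <= f_qr q r M)%nat by apply: f_qr_ge1 => //; lia.
have F1 := INR_ge f1; simpl in F1.
have fn1 : (1 <= f_qr q r n)%nat by apply: f_qr_ge1 => //; lia.
have Fn1 := INR_ge fn1; simpl in Fn1.
have Ik := INR_ge hk; simpl in Ik.
rewrite /rN; apply: rbound.
- exact: lM.
- exact: Ik.
- rewrite -ln_pow; last (have := INR_ge hM; simpl; lra).
  by rewrite -INR_expn; apply: lnle; [rewrite INR_expn; apply: pow_lt; have := INR_ge hM; simpl; lra | apply: INR_ge].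
- by rewrite -ln_1; apply: lnle; lra.
- have -> : INR k + 1 = INR k.+1 by rewrite S_INR.
  rewrite -ln_pow; last lra.
  by rewrite -INR_expn; apply: lnle; [lra | apply: INR_ge].
- split; first by rewrite -ln_1; apply: lnle; lra.
  by apply: lnle; [lra | apply: INR_ge; apply: f_qr_leN].
Qed.

Theorem proposition3p5 (q r : nat) :
  (1 <= r)%nat -> (r < q)%nat ->
  exists alpha : R, 0 <= alpha <= 1 /\
    Un_cv (fun N : nat => ln (INR (f_qr q r N)) / ln (INR N)) alpha.
Proof.
move=> hr hq.
have q0 : (0 < q)%nat by lia.
pose E := fun x => exists n, (2 <= n)%nat /\ x = - rN q r n.
have bE : bound E.
  exists 0 => x [n [hn ->]]; have := rN_bnd r q0 hn; lra.
have nE : exists x, E x by exists (- rN q r 2); exists 2%nat.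
have [m [ub lub]] := @completeness E bE nE.
have lo : forall n, (2 <= n)%nat -> - m <= rN q r n.
  by move=> n hn; have := ub (- rN q r n) (ex_intro _ n (conj hn erefl)); lra.
exists (- m); split.
  split.
  - have : m <= 0 by apply: lub => x [n [hn ->]]; have := rN_bnd r q0 hn; lra.
    lra.
  - have := lo 2%nat isT; have := rN_bnd r q0 (isT : (2 <= 2)%nat); lra.
change (Un_cv (rN q r) (- m)).
move=> eps heps.
have [M [hM hrM]] : exists M, (2 <= M)%nat /\ rN q r M < - m + eps / 2.
  apply: NNPP => H.
  have : m <= m - eps / 2; last lra.
  apply: lub => x [n [hn ->]].
  have : ~ (rN q r n < - m + eps / 2) by move=> h; apply: H; exists n.
  lra.
have [K [hK K0]] := archimed_cor1 (eps / 2) ltac:(lra).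
exists (expn M K) => n /leP hn.
have hM1 : (1 < M)%nat by lia.
have hMn : (M <= n)%nat.
  have K1 : (1 <= K)%nat by apply/ltP.
  have := leq_pexp2l (ltnW hM1) K1; rewrite expn1; lia.
have n0 : (0 < n)%nat by lia.
set k := trunc_log M n.
have hKk : (K <= k)%nat by apply: trunc_log_max.
have h1 := trunc_logP hM1 n0.
have h2 := trunc_log_ltn n hM1.
have hk : (1 <= k)%nat by lia.
have st := rN_step r q0 hM hk h1 h2.
have ln := lo n (leq_trans hM hMn).
have IK : / INR k <= / INR K.
  apply: Rinv_le_contravar; last exact: INR_ge.
  by apply: lt_0_INR; apply/ltP; lia.
rewrite /R_dist Rabs_right; lra.
Qed.
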